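(* Let $H$ be a complex Hilbert space, $E$ a finite-dimensional subspace of $H$ and $F$ a subspace of $E$. Then for any unitary operator $u$ on $H$ which fixes each element of $E^{\perp}$, there exists a unique unitary operator $\pi_{E,F}(u)$ on $H$ such that: (i) $\pi_{E,F}(u)$ fixes each element of $F^{\perp}$; (ii) the image of $H$ by $u - \pi_{E,F}(u)$ is included in the image of $F^{\perp}$ by $u - \mathrm{Id}$. Moreover, if $G$ is a subspace of $F$, then $\pi_{F,G}(\pi_{E,F}(u))$ is well-defined and equals $\pi_{E,G}(u)$. *)

(* Defs.v *)
From HB Require Import structures.
From mathcomp Require Import all_boot all_order all_algebra.
From mathcomp Require Import reals.
From mathcomp.real_closed Require Import complex.
Set Implicit Arguments.
Unset Strict Implicit.
Unset Printing Implicit Defensive.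
Import Order.TTheory GRing.Theory Num.Theory.
Local Open Scope ring_scope.

Section Hilbert.
Variable R : realType.
Variable V : lmodType R[i].
(* inner product, linear in the first argument, conjugate-linear in the second *)
Variable ip : V -> V -> R[i].

Definition is_inner_product : Prop :=
  [/\ (forall a x y z, ip (a *: x + y) z = a * ip x z + ip y z),
      (forall x y, ip y x = (ip x y)^*),
      (forall x, 0 <= ip x x) &
      (forall x, ip x x = 0 -> x = 0)].

(* completeness for the norm ||x|| = sqrt <x,x> (squared distances used) *)
Definition ip_complete : Prop :=
  forall s : nat -> V,
    (forall e : R[i], 0 < e -> exists N, forall n m, (N <= n)%N -> (N <= m)%N ->
        `|ip (s n - s m) (s n - s m)| < e) ->
    exists l : V, forall e : R[i], 0 < e -> exists N, forall n, (N <= n)%N ->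
        `|ip (s n - l) (s n - l)| < e.

Definition is_hilbert : Prop := is_inner_product /\ ip_complete.

Definition is_subspace (S : V -> Prop) : Prop :=
  S 0 /\ forall a x y, S x -> S y -> S (a *: x + y).

Definition in_span (s : seq V) (x : V) : Prop :=
  exists c : 'I_(size s) -> R[i], x = \sum_(i < size s) c i *: s`_i.

Definition is_fd_subspace (S : V -> Prop) : Prop :=
  is_subspace S /\ exists s : seq V, forall x, S x <-> in_span s x.

Definition subspace_le (S T : V -> Prop) : Prop := forall x, S x -> T x.

Definition orth (S : V -> Prop) (x : V) : Prop := forall y, S y -> ip x y = 0.

Definition unitary (u : V -> V) : Prop :=
  [/\ (forall a x y, u (a *: x + y) = a *: u x + u y),
      bijective u &
      (forall x y, ip (u x) (u y) = ip x y)].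

Definition fixes (u : V -> V) (S : V -> Prop) : Prop := forall x, S x -> u x = x.

(* p satisfies the defining properties of pi_{E,F}(u):
   p unitary, (i) p fixes F^perp, (ii) (u - p)(H) is included in (u - Id)(F^perp) *)
Definition is_piEF (F : V -> Prop) (u p : V -> V) : Prop :=
  [/\ unitary p, fixes p (orth F) &
      (forall x, exists y, orth F y /\ u x - p x = u y - y)].

End Hilbert.

(* Main.v *)
Require Import Defs.
From HB Require Import structures.
From mathcomp Require Import all_boot all_order all_algebra.
From mathcomp Require Import reals.
From mathcomp.real_closed Require Import complex.
From Stdlib Require Import Classical ClassicalEpsilon FunctionalExtensionality.
Import Order.TTheory GRing.Theory Num.Theory.
Local Open Scope ring_scope.
Set Implicit Arguments.
Unset Strict Implicit.

Section Basic.
Variable R : realType.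
Variable V : lmodType R[i].
Variable ip : V -> V -> R[i].
Hypothesis hip : is_inner_product ip.

Lemma ipZDl a x y z : ip (a *: x + y) z = a * ip x z + ip y z.
Proof. by case: hip => h _ _ _; apply: h. Qed.
Lemma ipC x y : ip y x = (ip x y)^*.
Proof. by case: hip => _ h _ _; apply: h. Qed.
Lemma ip_eq0 x : ip x x = 0 -> x = 0.
Proof. by case: hip => _ _ _ h; apply: h. Qed.
Lemma ipDl x y z : ip (x + y) z = ip x z + ip y z.
Proof. by rewrite -[x]scale1r ipZDl mul1r scale1r. Qed.
Lemma ip0l z : ip 0 z = 0.
Proof. have h := ipDl 0 0 z; rewrite addr0 in h. by apply: (@addrI _ (ip 0 z)); rewrite addr0 -h. Qed.
Lemma ipZl a x z : ip (a *: x) z = a * ip x z.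
Proof. by rewrite -[a *: x]addr0 ipZDl ip0l addr0. Qed.
Lemma ipNl x z : ip (- x) z = - ip x z.
Proof. by rewrite -scaleN1r ipZl mulN1r. Qed.
Lemma ipBl x y z : ip (x - y) z = ip x z - ip y z.
Proof. by rewrite ipDl ipNl. Qed.
Lemma ip0r z : ip z 0 = 0.
Proof. by rewrite ipC ip0l conjC0. Qed.
Lemma ipDr x y z : ip z (x + y) = ip z x + ip z y.
Proof. by rewrite ipC ipDl rmorphD (ipC x z) (ipC y z). Qed.
Lemma ipZr a x z : ip z (a *: x) = a^* * ip z x.
Proof. by rewrite ipC ipZl rmorphM (ipC x z). Qed.
Lemma ipNr x z : ip z (- x) = - ip z x.
Proof. by rewrite ipC ipNl rmorphN (ipC x z). Qed.
Lemma ipBr x y z : ip z (x - y) = ip z x - ip z y.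
Proof. by rewrite ipDr ipNr. Qed.
Lemma ipxx_conj x : (ip x x)^* = ip x x.
Proof. by rewrite -(ipC x x). Qed.
Lemma ip0C x y : ip x y = 0 -> ip y x = 0.
Proof. by move=> h; rewrite ipC h conjC0. Qed.

Lemma fix_of_ip (g : V -> V) y : ip (g y) (g y) = ip y y ->
  ip (g y - y) y = 0 -> g y = y.
Proof.
move=> hg h; apply/eqP; rewrite -subr_eq0; apply/eqP; apply: ip_eq0.
have eg : g y = y + (g y - y) by rewrite addrC subrK.
move: (g y - y) h eg => d h eg.
move: hg; rewrite eg !ipDl !ipDr h (ip0C h) !addr0 add0r.
by move/eqP; rewrite -subr_eq0 addrC addKr => /eqP.
Qed.

End Basic.
Section Span.
Variable R : realType.
Variable V : lmodType R[i].

Lemma subD (S : V -> Prop) : is_subspace S -> forall x y, S x -> S y -> S (x + y).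
Proof. by case=> _ h x y hx hy; have := h 1 x y hx hy; rewrite scale1r. Qed.
Lemma subZ (S : V -> Prop) : is_subspace S -> forall a x, S x -> S (a *: x).
Proof. by case=> h0 h a x hx; have := h a x 0 hx h0; rewrite addr0. Qed.
Lemma subN (S : V -> Prop) : is_subspace S -> forall x, S x -> S (- x).
Proof. by move=> hS x hx; rewrite -scaleN1r; apply: subZ. Qed.
Lemma subB (S : V -> Prop) : is_subspace S -> forall x y, S x -> S y -> S (x - y).
Proof. by move=> hS x y hx hy; apply: subD => //; apply: subN. Qed.
Lemma sub0 (S : V -> Prop) : is_subspace S -> S 0.
Proof. by case. Qed.

Fixpoint spn (s : seq V) (x : V) : Prop :=
  match s with
  | [::] => x = 0
  | a :: s' => exists c, spn s' (x - c *: a)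
  end.

Lemma spn_sub s : is_subspace (spn s).
Proof.
elim: s => [|a s [h0 h]] /=; first by split=> // a x y -> ->; rewrite scaler0 addr0.
split; first by exists 0; rewrite scale0r subr0.
move=> b x y [c hx] [d hy]; exists (b * c + d).
have -> : b *: x + y - (b * c + d) *: a = b *: (x - c *: a) + (y - d *: a).
  by rewrite scalerDl -scalerA scalerBr opprD addrACA.
exact: h.
Qed.

Lemma in_spanP s x : in_span s x <-> spn s x.
Proof.
elim: s x => [|a s IH] x /=.
  split; first by case=> c ->; rewrite big_ord0.
  by move=> ->; exists (fun _ => 0); rewrite big_ord0.
split.
  case=> c ->; exists (c ord0); apply/IH; exists (fun i => c (lift ord0 i)).
  by rewrite big_ord_recl addrAC subrr add0r.
case=> c0 /IH [c hc]; exists (fun i => if unlift ord0 i is Some j then c j else c0).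
rewrite big_ord_recl /= unlift_none.
under eq_bigr => i _ do rewrite liftK.
by rewrite -hc addrC subrK.
Qed.


Lemma subfd s : forall S : V -> Prop, is_subspace S -> (forall x, S x -> spn s x) ->
  exists t, forall x, S x <-> spn t x.
Proof.
elim: s => [|a s IH] S hS hSs.
  exists [::] => x /=; split; first exact: hSs.
  by move=> ->; apply: sub0.
have hS' : is_subspace (fun x => S x /\ spn s x).
  split; first by split; [apply: sub0 | apply: sub0 (spn_sub s)].
  move=> b x y [h1 h2] [h3 h4]; split; first by case: hS => _; apply.
  by case: (spn_sub s) => _; apply.
have [t ht] := IH _ hS' (fun x h => proj2 h).
case: (classic (forall x, S x -> spn s x)) => [hall|].
  by exists t => x; rewrite -ht; split; [move=> h; split=> //; apply: hall|case].
move=> /not_all_ex_not [x0 hn0].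
have hx0 := not_imply_elim _ _ hn0; have hn := not_imply_elim2 _ _ hn0.
have [c0 hc0] := hSs _ hx0.
have c0n : c0 != 0.
  by apply/negP => /eqP c00; apply: hn; move: hc0; rewrite c00 scale0r subr0.
exists (x0 :: t) => x /=; split.
  move=> hx; have [c hc] := hSs _ hx; exists (c / c0); apply/ht; split.
    by apply: subB => //; apply: subZ.
  have -> : x - (c / c0) *: x0 = (x - c *: a) - (c / c0) *: (x0 - c0 *: a).
    by rewrite scalerBr scalerA divfK // opprB addrA subrK.
  by apply: subB (spn_sub s) _ _ hc _; apply: subZ (spn_sub s) _ _ hc0.
case=> d /ht [hd _].
have -> : x = d *: x0 + (x - d *: x0) by rewrite addrC subrK.
by apply: subD => //; apply: subZ.
Qed.

End Span.

Section Proj.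
Variable R : realType.
Variable V : lmodType R[i].
Variable ip : V -> V -> R[i].
Hypothesis hip : is_inner_product ip.

Lemma orth_cons a t v : ip v a = 0 -> (forall z, spn t z -> ip v z = 0) ->
  forall z, spn (a :: t) z -> ip v z = 0.
Proof.
move=> ha ht z [d hd].
have -> : z = (z - d *: a) + d *: a by rewrite subrK.
by rewrite (ipDr hip) (ipZr hip) ha mulr0 addr0 ht.
Qed.

Lemma proj t : forall x, exists y, spn t y /\ forall z, spn t z -> ip (x - y) z = 0.
Proof.
elim: t => [|a t IH] x.
  by exists 0; split => // z /= ->; rewrite (ip0r hip).
have [pa [hpa opa]] := IH a; have [px [hpx opx]] := IH x.
set b := a - pa.
have bo : forall z, spn t z -> ip b z = 0 by [].
case: (eqVneq (ip b b) 0) => [bb0|bbn0].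
  have b0 := ip_eq0 hip bb0.
  have ea : a = pa by apply/eqP; rewrite -subr_eq0; apply/eqP.
  exists px; split; first by exists 0; rewrite scale0r subr0.
  move=> z [d hd]; have -> : z = (z - d *: a) + d *: a by rewrite subrK.
  by rewrite (ipDr hip) (ipZr hip) (opx _ hd) ea (opx _ hpa) mulr0 addr0.
set c := ip x b / ip b b.
exists (px + c *: b); split.
  exists c; have -> : px + c *: b - c *: a = px - c *: pa.
    by rewrite /b scalerBr addrA addrAC addrK.
  by apply: (subB (spn_sub t)) => //; apply: (subZ (spn_sub t)).
have ev : x - (px + c *: b) = (x - px) - c *: b by rewrite opprD addrA.
have ot : forall z, spn t z -> ip (x - (px + c *: b)) z = 0.
  by move=> z hz; rewrite ev (ipBl hip) (ipZl hip) opx // bo // mulr0 subr0.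
apply: orth_cons => //.
have -> : a = b + pa by rewrite /b subrK.
rewrite (ipDr hip) (ot _ hpa) addr0 ev (ipBl hip) (ipZl hip) (ipBl hip).
rewrite (ip0C hip (bo _ hpx)) subr0 /c divfK //.
by rewrite subrr.
Qed.
End Proj.

Lemma I1 (R : realType) (V : lmodType R[i]) (a : R[i]) (x y X Y : V) :
  (a *: x + y) - (a *: X + Y) = a *: (x - X) + (y - Y).
Proof. by rewrite scalerBr opprD addrACA. Qed.

Lemma orth_sub (R : realType) (V : lmodType R[i]) (ip : V -> V -> R[i]) S :
  is_inner_product ip -> is_subspace (orth ip S).
Proof.
move=> hip; split; first by move=> y _; rewrite (ip0l hip).
by move=> a x y hx hy z hz; rewrite (ipZDl hip) hx // hy // mulr0 addr0.
Qed.

Section Exist.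
Variable R : realType.
Variable V : lmodType R[i].
Variable ip : V -> V -> R[i].
Hypothesis hip : is_inner_product ip.
Variables (E F : V -> Prop) (sE : seq V).
Hypothesis hsE : forall x, E x <-> spn sE x.
Hypothesis hF : is_subspace F.
Hypothesis hFE : subspace_le F E.
Variable g : V -> V.
Hypothesis hgl : forall a x y, g (a *: x + y) = a *: g x + g y.
Hypothesis hgi : forall x y, ip (g x) (g y) = ip x y.
Hypothesis hgf : fixes g (orth ip E).

Lemma exist_rel v : exists y, orth ip F y /\
  forall z, orth ip F z -> ip ((g v - v) - (g y - y)) z = 0.
Proof.
pose K := fun x => E x /\ orth ip F x.
have hE : is_subspace E.
  split; first by apply/hsE; apply: sub0 (spn_sub sE).
  by move=> a x y /hsE hx /hsE hy; apply/hsE; case: (spn_sub sE) => _; apply.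
have hK : is_subspace K.
  split; first by split; [apply: sub0 | apply: sub0 (orth_sub _ hip)].
  move=> a x y [h1 h2] [h3 h4]; split; first by case: hE => _; apply.
  by case: (orth_sub F hip) => _; apply.
have [tK htK] := subfd hK (fun x h => (hsE x).1 h.1).
pose T := fun y => g y - y.
have g0 : g 0 = 0.
  have := hgl 1 0 0; rewrite !scale1r addr0 => h.
  by apply: (@addrI _ (g 0)); rewrite addr0 -h.
have TL : forall a x y, T (a *: x + y) = a *: T x + T y.
  by move=> a x y; rewrite /T hgl I1.
pose M := fun m => K m /\ exists y, K y /\ forall k, K k -> ip (T y - m) k = 0.
have hM : is_subspace M.
  split.
    split; first exact: sub0.
    exists 0; split; first exact: sub0.
    by move=> k _; rewrite /T g0 !subr0 (ip0l hip).
  move=> a m1 m2 [k1 [y1 [hy1 o1]]] [k2 [y2 [hy2 o2]]]; split.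
    by case: hK => _; apply.
  exists (a *: y1 + y2); split; first by case: hK => _; apply.
  by move=> k hk; rewrite TL I1 (ipZDl hip) o1 // o2 // mulr0 addr0.
have [tM htM] := subfd hM (fun x h => (hsE x).1 h.1.1).
have [z [/htK hz oz]] := proj hip tK (T v).
have {}oz : forall k, K k -> ip (T v - z) k = 0 by move=> k /htK; apply: oz.
have [r [/htM hr or]] := proj hip tM z.
have {}or : forall m, M m -> ip (z - r) m = 0 by move=> m /htM; apply: or.
have Kw : K (z - r) by apply: (subB hK) => //; case: hr.
have c1 : forall y, K y -> ip (z - r) (T y) = 0.
  move=> y hy.
  have [m [/htK hm om]] := proj hip tK (T y).
  have {}om : forall k, K k -> ip (T y - m) k = 0 by move=> k /htK; apply: om.
  have Mm : M m by split=> //; exists y.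
  have -> : T y = (T y - m) + m by rewrite subrK.
  by rewrite (ipDr hip) (ip0C hip (om _ Kw)) add0r or.
have c2 : g (z - r) = z - r.
  by apply: (fix_of_ip hip) => //; apply: (ip0C hip); apply: c1.
have c3 : ip z (z - r) = 0.
  have ez : z = T v - (T v - z) by rewrite opprB addrC subrK.
  rewrite {1}ez (ipBl hip) oz // subr0 /T (ipBl hip) -{1}c2 hgi subrr //.
have c4 : z - r = 0.
  apply: (ip_eq0 hip); rewrite {1}(ipBl hip) c3 (ip0C hip (or _ hr)) subrr //.
have ez : z = r by apply/eqP; rewrite -subr_eq0; apply/eqP.
rewrite -ez in hr; case: hr => _ [y [Ky oy]].
exists y; split; first by case: Ky.
move=> z' hz'.
have [e [/hsE he oe]] := proj hip sE z'.
have {}oe : orth ip E (z' - e) by move=> k /hsE; apply: oe.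
have Ke : K e.
  split=> // f hf.
  have ee : e = z' - (z' - e) by rewrite opprB addrC subrK.
  by rewrite {1}ee (ipBl hip) hz' // (oe _ (hFE hf)) subrr.
have Torth : forall x, ip (T x) (z' - e) = 0.
  by move=> x; rewrite /T (ipBl hip) -{1}(hgf oe) hgi subrr.
have ez' : z' = e + (z' - e) by rewrite addrC subrK.
rewrite {1}ez' (ipDr hip) (ipBl hip (T v) (T y) (z' - e)) !Torth subrr addr0.
have -> : T v - T y = (T v - z) - (T y - z) by rewrite (opprB (T y) z) addrA subrK.
by rewrite (ipBl hip) oz // oy // subrr.
Qed.

End Exist.

Definition Rel (R : realType) (V : lmodType R[i]) (ip : V -> V -> R[i])
  (F : V -> Prop) (u : V -> V) (v w : V) :=
  (exists y, orth ip F y /\ u v - w = u y - y) /\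
  (forall z, orth ip F z -> ip w z = ip v z).

Section Core.
Variable R : realType.
Variable V : lmodType R[i].
Variable ip : V -> V -> R[i].
Hypothesis hip : is_inner_product ip.
Variable F : V -> Prop.

Definition lin (u : V -> V) := forall a x y, u (a *: x + y) = a *: u x + u y.
Definition isom (u : V -> V) := forall x y, ip (u x) (u y) = ip x y.

Lemma linB u : lin u -> forall x y, u (x - y) = u x - u y.
Proof.
move=> hl x y.
have u0 : u 0 = 0.
  have := hl 1 0 0; rewrite !scale1r addr0 => h.
  by apply: (@addrI _ (u 0)); rewrite addr0 -h.
have uN : u (- y) = - u y.
  by have := hl (-1) y 0; rewrite addr0 u0 addr0 !scaleN1r; apply.
have := hl 1 x (- y); rewrite scale1r uN scale1r; apply.
Qed.

Lemma I2 (A B C : V) : (A - B) - (A - C) = C - B.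
Proof. by rewrite opprB addrC addrA subrK. Qed.
Lemma I3 (a b c d : V) : (a - b) - (c - d) = (a - c) - (b - d).
Proof. by rewrite !opprD addrACA. Qed.
Lemma I4 (A X : V) : A - (A - X) = X.
Proof. by rewrite opprB addrC subrK. Qed.

Lemma rel_uniq u v w1 w2 : lin u -> isom u ->
  Rel ip F u v w1 -> Rel ip F u v w2 -> w1 = w2.
Proof.
move=> hl hi [[y1 [o1 e1]] c1] [[y2 [o2 e2]] c2].
have ed : w1 - w2 = u (y2 - y1) - (y2 - y1).
  by rewrite -(I2 (u v)) e1 e2 (linB hl) I3.
have oy : orth ip F (y2 - y1) by apply: (subB (orth_sub F hip)).
have dz : forall z, orth ip F z -> ip (w1 - w2) z = 0.
  by move=> z hz; rewrite (ipBl hip) c1 // c2 // subrr.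
have := dz _ oy; rewrite ed => h0.
have h := fix_of_ip hip (hi _ _) h0.
by apply/eqP; rewrite -subr_eq0 ed h subrr.
Qed.

Lemma rel_lin u p : lin u -> isom u -> (forall v, Rel ip F u v (p v)) -> lin p.
Proof.
move=> hl hi hp a v1 v2; symmetry; apply: (rel_uniq hl hi _ (hp _)).
have [[y1 [o1 e1]] c1] := hp v1; have [[y2 [o2 e2]] c2] := hp v2.
split.
  exists (a *: y1 + y2); split; first by case: (orth_sub F hip) => _; apply.
  by rewrite hl I1 e1 e2 hl -I1.
by move=> z hz; rewrite !(ipZDl hip) c1 // c2.
Qed.

Lemma rel_isom u p : lin u -> isom u -> (forall v, Rel ip F u v (p v)) -> isom p.
Proof.
move=> hl hi hp v1 v2.
have [[y1 [o1 e1]] c1] := hp v1; have [[y2 [o2 e2]] c2] := hp v2.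
have pe : forall v y, u v - p v = u y - y -> p v = u (v - y) + y.
  by move=> v y e; rewrite (linB hl) -[p v](I4 (u v)) e opprD opprK addrA.
have ve : forall v y : V, v = (v - y) + y by move=> v y; rewrite subrK.
have h1 : ip (u (v1 - y1)) y2 = ip (v1 - y1) y2.
  have := c1 _ o2; rewrite (pe _ _ e1) {2}(ve v1 y1) !(ipDl hip).
  by move/addIr.
have h2 : ip (u (v2 - y2)) y1 = ip (v2 - y2) y1.
  have := c2 _ o1; rewrite (pe _ _ e2) {2}(ve v2 y2) !(ipDl hip).
  by move/addIr.
rewrite (pe _ _ e1) (pe _ _ e2) {2}(ve v1 y1) {2}(ve v2 y2).
move: (v1 - y1) (v2 - y2) h1 h2 => a1 a2 h1 h2.
by rewrite !(ipDl hip) !(ipDr hip) hi h1 (ipC hip (u a2)) h2 -(ipC hip a2 y1).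
Qed.

Lemma rel_fix u p : lin u -> isom u -> (forall v, Rel ip F u v (p v)) ->
  fixes p (orth ip F).
Proof.
move=> hl hi hp z hz; apply: (rel_uniq hl hi (hp z)).
by split=> //; exists z.
Qed.

Lemma rel_swap f1 f2 v w : lin f1 -> lin f2 -> cancel f2 f1 ->
  Rel ip F f2 v w -> Rel ip F f1 w v.
Proof.
move=> l1 l2 K [[y [oy e]] c]; split; last by move=> z hz; rewrite c.
exists y; split=> //.
have := congr1 f1 e; rewrite !(linB l1) !K => h.
by rewrite -opprB h opprB.
Qed.

Lemma piEF_rel u p : is_piEF ip F u p -> forall v, Rel ip F u v (p v).
Proof.
case=> [[_ _ hpi] hfix hii] v; split; first exact: hii.
by move=> z hz; rewrite -{1}(hfix z hz) hpi.
Qed.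

End Core.

Lemma I6 (R : realType) (V : lmodType R[i]) (A B C D : V) :
  (A + B) - (C + D) = (A - C) + (B - D).
Proof. by rewrite opprD addrACA. Qed.


Lemma rel_ex (R : realType) (V : lmodType R[i]) (ip : V -> V -> R[i])
  (hip : is_inner_product ip) (E F : V -> Prop) (sE : seq V)
  (hsE : forall x, E x <-> spn sE x) (hFE : subspace_le F E) (g : V -> V)
  (hgl : lin g) (hgi : isom ip g) (hgf : fixes g (orth ip E)) v :
  exists w, Rel ip F g v w.
Proof.
have [y [oy h]] := exist_rel hip hsE hFE hgl hgi hgf v.
exists (g v - (g y - y)); split; first by exists y; rewrite I4.
move=> z hz; apply/eqP; rewrite -subr_eq0 -(ipBl hip); apply/eqP.
by rewrite addrAC h.
Qed.

Lemma core (R : realType) (V : lmodType R[i]) (ip : V -> V -> R[i])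
  (hip : is_inner_product ip) (E F : V -> Prop) (sE : seq V)
  (hsE : forall x, E x <-> spn sE x) (hFE : subspace_le F E) (u : V -> V)
  (hu : unitary ip u) (hufix : fixes u (orth ip E)) :
  exists! p, is_piEF ip F u p.
Proof.
case: hu => hul hub hui.
case: hub => g gK1 gK2.
have hgl : lin g.
  by move=> a x y; apply: (can_inj gK1); rewrite hul !gK2.
have hgi : isom ip g by move=> x y; rewrite -hui !gK2.
have hgf : fixes g (orth ip E) by move=> z hz; rewrite -{1}(hufix z hz) gK1.
pose p := fun v => proj1_sig (constructive_indefinite_description _
   (rel_ex hip hsE hFE hul hui hufix v)).
pose p' := fun v => proj1_sig (constructive_indefinite_description _
   (rel_ex hip hsE hFE hgl hgi hgf v)).
have hpu : forall v, Rel ip F u v (p v) := fun v => proj2_sig (constructive_indefinite_description _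
   (rel_ex hip hsE hFE hul hui hufix v)).
have hpg : forall v, Rel ip F g v (p' v) := fun v => proj2_sig (constructive_indefinite_description _
   (rel_ex hip hsE hFE hgl hgi hgf v)).
exists p; split.
  split; [split | |].
  - exact: (rel_lin hip hul hui hpu).
  - exists p'.
      move=> v; apply: (rel_uniq hip hgl hgi (hpg (p v))).
      exact: (rel_swap hgl hul gK1 (hpu v)).
    move=> v; apply: (rel_uniq hip hul hui (hpu (p' v))).
    exact: (rel_swap hul hgl gK2 (hpg v)).
  - exact: (rel_isom hip hul hui hpu).
  - exact: (rel_fix hip hul hui hpu).
  - by move=> x; case: (hpu x).
move=> q hq; apply: functional_extensionality => v.
exact: (rel_uniq hip hul hui (hpu v) (piEF_rel hq v)).
Qed.

Theorem proposition2p1 (R : realType) (V : lmodType R[i]) (ip : V -> V -> R[i])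
  (hH : is_hilbert ip)
  (E F : V -> Prop) (hE : is_fd_subspace E) (hF : is_subspace F)
  (hFE : subspace_le F E)
  (u : V -> V) (hu : unitary ip u) (hufix : fixes u (orth ip E)) :
  (exists! p : V -> V, is_piEF ip F u p) /\
  (forall G : V -> Prop, is_subspace G -> subspace_le G F ->
     forall p : V -> V, is_piEF ip F u p ->
       (unitary ip p /\ fixes p (orth ip F) /\ is_fd_subspace F) /\
       (exists! q : V -> V, is_piEF ip G p q) /\
       (forall q : V -> V, is_piEF ip G p q <-> is_piEF ip G u q)).
Proof.
case: hH => hip _.
case: hE => _ [sE0 hsE0].
have hsE : forall x, E x <-> spn sE0 x.
  by move=> x; apply: iff_trans (hsE0 x) (in_spanP _ _).
split; first exact: (core hip hsE hFE hu hufix).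
move=> G hG hGF p hp.
have [tF htF] := subfd hF (fun x h => (hsE x).1 (hFE _ h)).
have hFd : is_fd_subspace F.
  split=> //; exists tF => x; apply: iff_trans (htF x) _.
  by apply: iff_sym; apply: in_spanP.
case: (hp) => hpU hpfix hpii.
have hGE : subspace_le G E by move=> x hx; apply: hFE; apply: hGF.
have hq1 := core hip htF hGF hpU hpfix.
split; first by [].
split; first by [].
have [q0 [hq0 uq0]] := core hip hsE hGE hu hufix.
case: hu => hul hub hui.
have orthFG : forall y, orth ip F y -> orth ip G y.
  by move=> y hy g hg; apply: hy; apply: hGF.
have trans : forall q, is_piEF ip G p q -> is_piEF ip G u q.
  move=> q [hqU hqfix hqii]; split=> // x.
  have [y [oy ey]] := hpii x.
  have [z [oz ez]] := hqii x.
  have [y' [oy' ey']] := hpii z.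
  exists (y + (z - y')); split.
    apply: (subD (orth_sub G hip)); first exact: orthFG.
    by apply: (subB (orth_sub G hip)) => //; apply: orthFG.
  have e1 : u x - q x = (u x - p x) + (p x - q x) by rewrite addrA subrK.
  have e2 : p z - z = (u z - z) - (u y' - y').
    by rewrite -[p z](I4 (u z)) ey' addrAC.
  have uD : u (y + (z - y')) = u y + (u z - u y').
    by have := hul 1 y (z - y'); rewrite !scale1r (linB hul); apply.
  rewrite e1 ey ez e2 uD; symmetry.
  by rewrite I6 I3.
move=> q; split; first exact: trans.
move=> hq.
have [q1 [hq1' uq1]] := hq1.
have e0 := uq0 _ hq; have e1 := uq0 _ (trans _ hq1').
by rewrite -e0 e1.
Qed.
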